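(* Let $C\in\mathscr{C}$ and let $K_C$ be obtained as follows: choose a distinguished triangle $S[-1]\to C\overset{a}{\to}T\to S$ with $S\in\mathcal{S},T\in\mathcal{T}$; choose a distinguished triangle $U\to T\overset{b}{\to}V[1]\to U[1]$ with $U\in\mathcal{U},V\in\mathcal{V}$; and choose a distinguished triangle $V\to K_C\overset{k_C}{\to}C\overset{b\circ a}{\to}V[1]$. Then: (1) $K_C\in\mathscr{C}^-$; (2) if $C\in\mathscr{C}^+$, then $K_C\in\mathcal{H}$.
   Context: $\mathscr{C}$ is a triangulated category with shift $[1]$; subcategories are full, additive, closed under isomorphisms and direct summands. $\mathrm{Ext}^1(X,Y)=\mathscr{C}(X,Y[1])$. $\mathcal{M}\ast\mathcal{N}$ is the full subcategory of objects $C$ admitting a distinguished triangle $M\to C\to N\to M[1]$ with $M\in\mathcal{M}$, $N\in\mathcal{N}$. A cotorsion pair $(\mathcal{U},\mathcal{V})$: $\mathrm{Ext}^1(\mathcal{U},\mathcal{V})=0$ and $\mathscr{C}=\mathcal{U}\ast\mathcal{V}[1]$. Fix a twin cotorsion pair, i.e. cotorsion pairs $(\mathcal{S},\mathcal{T}),(\mathcal{U},\mathcal{V})$ with $\mathrm{Ext}^1(\mathcal{S},\mathcal{V})=0$. Put $\mathcal{W}=\mathcal{T}\cap\mathcal{U}$, $\mathscr{C}^-=\mathcal{S}[-1]\ast\mathcal{W}$, $\mathscr{C}^+=\mathcal{W}\ast\mathcal{V}[1]$, $\mathcal{H}=\mathscr{C}^+\cap\mathscr{C}^-$. *)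

(* Defs.v *)
From HB Require Import structures.
From mathcomp Require Import all_boot all_algebra.
Set Implicit Arguments.
Unset Strict Implicit.
Unset Printing Implicit Defensive.
Import GRing.Theory.
Local Open Scope ring_scope.

Record TriCat := {
  obj : Type;
  Mor : obj -> obj -> zmodType;
  cmp : forall X Y Z : obj, Mor Y Z -> Mor X Y -> Mor X Z;
  idm : forall X : obj, Mor X X;
  cmp_assoc : forall X Y Z W (h : Mor Z W) (g : Mor Y Z) (f : Mor X Y),
      cmp h (cmp g f) = cmp (cmp h g) f;
  cmp_idl : forall X Y (f : Mor X Y), cmp (idm Y) f = f;
  cmp_idr : forall X Y (f : Mor X Y), cmp f (idm X) = f;
  cmp_addl : forall X Y Z (g1 g2 : Mor Y Z) (f : Mor X Y),
      cmp (g1 + g2) f = cmp g1 f + cmp g2 f;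
  cmp_addr : forall X Y Z (g : Mor Y Z) (f1 f2 : Mor X Y),
      cmp g (f1 + f2) = cmp g f1 + cmp g f2;
  zero_obj : obj;
  zero_obj_hom : forall X (f : Mor zero_obj X), f = 0;
  biprod : forall X Y : obj, exists (P : obj) (i1 : Mor X P) (i2 : Mor Y P)
      (p1 : Mor P X) (p2 : Mor P Y),
      [/\ cmp p1 i1 = idm X, cmp p2 i2 = idm Y, cmp p1 i2 = 0,
          cmp p2 i1 = 0 & cmp i1 p1 + cmp i2 p2 = idm P];
  sh : obj -> obj;
  shm : forall X Y, Mor X Y -> Mor (sh X) (sh Y);
  shm_id : forall X, shm (idm X) = idm (sh X);
  shm_comp : forall X Y Z (g : Mor Y Z) (f : Mor X Y),
      shm (cmp g f) = cmp (shm g) (shm f);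
  shm_add : forall X Y (f g : Mor X Y), shm (f + g) = shm f + shm g;
  shm_inj : forall X Y (f g : Mor X Y), shm f = shm g -> f = g;
  shm_surj : forall X Y (g : Mor (sh X) (sh Y)), exists f, shm f = g;
  sh_esurj : forall Y, exists X (u : Mor (sh X) Y) (v : Mor Y (sh X)),
      cmp v u = idm (sh X) /\ cmp u v = idm Y;
  dist : forall X Y Z, Mor X Y -> Mor Y Z -> Mor Z (sh X) -> Prop;
  dist_iso : forall X Y Z (f : Mor X Y) (g : Mor Y Z) (h : Mor Z (sh X))
      X' Y' Z' (f' : Mor X' Y') (g' : Mor Y' Z') (h' : Mor Z' (sh X'))
      (u : Mor X X') (v : Mor Y Y') (w : Mor Z Z')
      (u' : Mor X' X) (v' : Mor Y' Y) (w' : Mor Z' Z),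
      cmp u' u = idm X -> cmp u u' = idm X' ->
      cmp v' v = idm Y -> cmp v v' = idm Y' ->
      cmp w' w = idm Z -> cmp w w' = idm Z' ->
      cmp v f = cmp f' u -> cmp w g = cmp g' v ->
      cmp (shm u) h = cmp h' w ->
      dist f g h -> dist f' g' h';
  dist_id : forall X, dist (idm X) (0 : Mor X zero_obj) (0 : Mor zero_obj (sh X));
  dist_ext : forall X Y (f : Mor X Y), exists Z (g : Mor Y Z) (h : Mor Z (sh X)),
      dist f g h;
  dist_rot : forall X Y Z (f : Mor X Y) (g : Mor Y Z) (h : Mor Z (sh X)),
      dist f g h <-> dist g h (- shm f);
  dist_mor : forall X Y Z (f : Mor X Y) (g : Mor Y Z) (h : Mor Z (sh X))
      X' Y' Z' (f' : Mor X' Y') (g' : Mor Y' Z') (h' : Mor Z' (sh X'))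
      (u : Mor X X') (v : Mor Y Y'),
      dist f g h -> dist f' g' h' -> cmp v f = cmp f' u ->
      exists w : Mor Z Z', cmp w g = cmp g' v /\ cmp (shm u) h = cmp h' w;
  dist_oct : forall X Y Z (f : Mor X Y) (g : Mor Y Z)
      Z' (f1 : Mor Y Z') (f2 : Mor Z' (sh X))
      X' (g1 : Mor Z X') (g2 : Mor X' (sh Y))
      Y' (h1 : Mor Z Y') (h2 : Mor Y' (sh X)),
      dist f f1 f2 -> dist g g1 g2 -> dist (cmp g f) h1 h2 ->
      exists (u : Mor Z' Y') (v : Mor Y' X'),
      [/\ dist u v (cmp (shm f1) g2), cmp u f1 = cmp h1 g,
          cmp h2 u = f2, cmp v h1 = g1 & cmp g2 v = cmp (shm f) h2]
}.

Arguments cmp {t X Y Z}.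
Arguments idm {t}.
Arguments sh {t}.
Arguments shm {t X Y}.
Arguments dist {t X Y Z}.

Section Sub.
Variable C : TriCat.

Definition iso (X Y : obj C) : Prop :=
  exists (u : Mor X Y) (v : Mor Y X), cmp v u = idm X /\ cmp u v = idm Y.

Definition summand (X Z : obj C) : Prop :=
  exists (Y : obj C) (i1 : Mor X Z) (i2 : Mor Y Z) (p1 : Mor Z X) (p2 : Mor Z Y),
    [/\ cmp p1 i1 = idm X, cmp p2 i2 = idm Y, cmp p1 i2 = 0,
        cmp p2 i1 = 0 & cmp i1 p1 + cmp i2 p2 = idm Z].

Definition is_biprod (X Y Z : obj C) : Prop :=
  exists (i1 : Mor X Z) (i2 : Mor Y Z) (p1 : Mor Z X) (p2 : Mor Z Y),
    [/\ cmp p1 i1 = idm X, cmp p2 i2 = idm Y, cmp p1 i2 = 0,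
        cmp p2 i1 = 0 & cmp i1 p1 + cmp i2 p2 = idm Z].

(* A (full) subcategory is given by its class of objects; it is
   additive, closed under isomorphisms and direct summands. *)
Definition subcat (P : obj C -> Prop) : Prop :=
  [/\ P (zero_obj C),
      (forall X Y Z, P X -> P Y -> is_biprod X Y Z -> P Z),
      (forall X Y, iso X Y -> P X -> P Y) &
      (forall X Z, summand X Z -> P Z -> P X)].

Definition Ext1 (X Y : obj C) := Mor X (sh Y).
Definition Ext1_zero (P Q : obj C -> Prop) : Prop :=
  forall X Y, P X -> Q Y -> forall f : Ext1 X Y, f = 0.

Definition shift1 (P : obj C -> Prop) : obj C -> Prop :=
  fun X => exists Y, P Y /\ iso (sh Y) X.
Definition shiftm1 (P : obj C -> Prop) : obj C -> Prop :=
  fun X => exists Y, P Y /\ iso (sh X) Y.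

Definition star (P Q : obj C -> Prop) : obj C -> Prop :=
  fun Z => exists (M N : obj C) (f : Mor M Z) (g : Mor Z N) (h : Mor N (sh M)),
    [/\ P M, Q N & dist f g h].

Definition inter (P Q : obj C -> Prop) : obj C -> Prop := fun X => P X /\ Q X.

Definition cotorsion (U V : obj C -> Prop) : Prop :=
  Ext1_zero U V /\ forall X, star U (shift1 V) X.

Definition twin_cotorsion (S T U V : obj C -> Prop) : Prop :=
  [/\ cotorsion S T, cotorsion U V & Ext1_zero S V].

Definition Wc (T U : obj C -> Prop) := inter T U.
Definition Cminus (S T U : obj C -> Prop) := star (shiftm1 S) (Wc T U).
Definition Cplus (T U V : obj C -> Prop) := star (Wc T U) (shift1 V).
Definition Hc (S T U V : obj C -> Prop) := inter (Cplus T U V) (Cminus S T U).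

End Sub.

(* Main.v *)
Require Import Defs.
From mathcomp Require Import all_boot all_algebra.
Set Implicit Arguments.
Unset Strict Implicit.
Unset Printing Implicit Defensive.
Import GRing.Theory.
Local Open Scope ring_scope.

Section L.
Variable C : TriCat.
Implicit Types X Y Z W : obj C.

Lemma cmp0l X Y Z (f : Mor X Y) : cmp (0 : Mor Y Z) f = 0.
Proof. apply: (addrI (cmp (0 : Mor Y Z) f)); by rewrite -cmp_addl !addr0. Qed.
Lemma cmp0r X Y Z (g : Mor Y Z) : cmp g (0 : Mor X Y) = 0.
Proof. apply: (addrI (cmp g (0 : Mor X Y))); by rewrite -cmp_addr !addr0. Qed.
Lemma cmpNl X Y Z (g : Mor Y Z) (f : Mor X Y) : cmp (- g) f = - cmp g f.
Proof. apply: (addrI (cmp g f)); by rewrite -cmp_addl !subrr cmp0l. Qed.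
Lemma cmpNr X Y Z (g : Mor Y Z) (f : Mor X Y) : cmp g (- f) = - cmp g f.
Proof. apply: (addrI (cmp g f)); by rewrite -cmp_addr !subrr cmp0r. Qed.
Lemma shm0 X Y : shm (0 : Mor X Y) = 0.
Proof. apply: (addrI (shm (0 : Mor X Y))); by rewrite -shm_add !addr0. Qed.
Lemma shmN X Y (f : Mor X Y) : shm (- f) = - shm f.
Proof. apply: (addrI (shm f)); by rewrite -shm_add !subrr shm0. Qed.

Lemma rot X Y Z (f : Mor X Y) (g : Mor Y Z) (h : Mor Z (sh X)) :
  dist f g h -> dist g h (- shm f).
Proof. by move/(dist_rot f g h). Qed.
Lemma unrot X Y Z (f : Mor X Y) (g : Mor Y Z) (h : Mor Z (sh X)) :
  dist g h (- shm f) -> dist f g h.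
Proof. by move/(dist_rot f g h). Qed.

Lemma dist_comp0 X Y Z (f : Mor X Y) (g : Mor Y Z) (h : Mor Z (sh X)) :
  dist f g h -> cmp g f = 0.
Proof.
move=> D.
have [w [Hw _]] := dist_mor (dist_id X) D (erefl (cmp f (idm X))).
by rewrite -Hw cmp0r.
Qed.

Lemma factor X Y Z (f : Mor X Y) (g : Mor Y Z) (h : Mor Z (sh X)) :
  dist f g h -> forall W (x : Mor W Y), cmp g x = 0 -> exists x', x = cmp f x'.
Proof.
move=> D W x gx.
have I1 := rot (dist_id W).
have R1 := rot D.
have E : cmp (0 : Mor (zero_obj C) Z) 0 = cmp g x by rewrite gx cmp0l.
have [w [_ Hw]] := dist_mor I1 R1 E.
have [x' ex'] := shm_surj w.
exists x'; apply: shm_inj.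
move: Hw; rewrite -ex' cmpNr cmpNl shm_id cmp_idr shm_comp => /oppr_inj.
done.
Qed.

Lemma cofactor X Y Z (f : Mor X Y) (g : Mor Y Z) (h : Mor Z (sh X)) :
  dist f g h -> forall W (y : Mor Y W), cmp y f = 0 -> exists y', y = cmp y' g.
Proof.
move=> D W y yf.
have D3 := rot (rot (rot D)).
have T := rot (rot (dist_id W)).
have E : cmp (shm y) (- shm f) = cmp (0 : Mor (zero_obj C) (sh W)) (0 : Mor (sh X) (zero_obj C)).
  by rewrite cmpNr -shm_comp yf shm0 oppr0 cmp0l.
have [w [Hw _]] := dist_mor D3 T E.
have [y' ey'] := shm_surj w.
exists y'; apply: shm_inj.
move: Hw; rewrite -ey' cmpNr cmpNl shm_id cmp_idl shm_comp => /oppr_inj.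
done.
Qed.

Lemma flip X Y Z (f : Mor X Y) (g : Mor Y Z) (h : Mor Z (sh X)) :
  dist f g h -> dist (- f) (- g) h.
Proof.
apply: (dist_iso (u:=idm X) (v:= - idm Y) (w:=idm Z) (u':=idm X) (v':= - idm Y) (w':=idm Z)).
- by rewrite cmp_idl.
- by rewrite cmp_idl.
- by rewrite cmpNl cmpNr opprK cmp_idl.
- by rewrite cmpNl cmpNr opprK cmp_idl.
- by rewrite cmp_idl.
- by rewrite cmp_idl.
- by rewrite cmpNl cmp_idl cmp_idr.
- by rewrite cmpNl cmpNr opprK cmp_idl cmp_idr.
- by rewrite shm_id cmp_idl cmp_idr.
Qed.

Lemma desh X Y Z (a : Mor X Y) (b : Mor Y Z) (c : Mor Z (sh X)) :
  dist (shm a) (shm b) (shm c) -> dist a b (- c).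
Proof.
move=> D; have D' := flip D.
apply: unrot. apply: unrot. apply: unrot.
by rewrite shmN opprK.
Qed.


Definition hz W B := forall y : Mor W B, y = 0.

Lemma hz_mid X Y Z (f : Mor X Y) (g : Mor Y Z) (h : Mor Z (sh X)) :
  dist f g h -> forall W, hz W X -> hz W Z -> hz W Y.
Proof.
move=> D W hX hZ y.
have [y' ->] := factor D (hZ (cmp g y)).
by rewrite (hX y') cmp0r.
Qed.

Lemma hz_iso W B B' : iso B B' -> hz W B -> hz W B'.
Proof.
move=> [u [v [_ uv]]] hB y.
by rewrite -[y]cmp_idl -uv -cmp_assoc (hB (cmp v y)) cmp0r.
Qed.

Lemma desh_summand Y Mc P (i1 : Mor (sh Y) (sh P)) (i2 : Mor (sh Mc) (sh P))
  (p1 : Mor (sh P) (sh Y)) (p2 : Mor (sh P) (sh Mc)) :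
  cmp p1 i1 = idm _ -> cmp p2 i2 = idm _ -> cmp p1 i2 = 0 -> cmp p2 i1 = 0 ->
  cmp i1 p1 + cmp i2 p2 = idm _ -> summand Y P.
Proof.
have [j1 <-] := shm_surj i1; have [j2 <-] := shm_surj i2.
have [q1 <-] := shm_surj p1; have [q2 <-] := shm_surj p2.
rewrite -!shm_comp -!shm_id -shm_add -!shm0 => e1 e2 e3 e4 e5.
exists Mc, j1, j2, q1, q2; split; exact: shm_inj.
Qed.

Lemma char (P Q : obj C -> Prop) : cotorsion P Q -> subcat Q ->
  forall Y, (forall S0, P S0 -> hz S0 (sh Y)) -> Q Y.
Proof.
move=> [_ cot] [_ _ _ Qsum] Y HY.
have [M [N [f [g [h [PM [T1 [QT1 [al [be [bal abe]]]]] D]]]]]] := cot (sh Y).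
have f0 : f = 0 := HY M PM f.
rewrite f0 in D. have D1 := rot D. rewrite shm0 oppr0 in D1.
have [sg Hsg] := factor (rot D1) (cmp0l _ (idm (sh M))).
have [r0 Hr0] := cofactor (rot (rot D1)) (cmp0r _ (idm (sh (sh Y)))).
have [r1 er1] := shm_surj r0.
have [r rg] : exists r, cmp r g = idm (sh Y).
  exists (- r1).
  apply: shm_inj; move: Hr0; rewrite -er1 cmpNr -shm_comp shm_id cmpNl shmN.
  by move=> ->.
have hg : cmp h g = 0 := dist_comp0 D1.
have [sg' [rs' hs']] : exists sg', cmp r sg' = 0 /\ cmp h sg' = idm _.
  exists (sg - cmp g (cmp r sg)); split.
    by rewrite cmp_addr cmpNr cmp_assoc rg cmp_idl subrr.
  by rewrite cmp_addr cmpNr cmp_assoc hg cmp0l subr0 -Hsg.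
have eg : cmp (idm N - cmp g r - cmp sg' h) g = 0.
  rewrite !cmp_addl !cmpNl cmp_idl -!cmp_assoc rg hg cmp0r cmp_idr.
  by rewrite subrr sub0r oppr0.
have [e' he'] := cofactor D1 eg.
have e'0 : e' = 0.
  have : cmp (idm N - cmp g r - cmp sg' h) sg' = 0.
    rewrite !cmp_addl !cmpNl cmp_idl -!cmp_assoc rs' hs' cmp0r cmp_idr.
    by rewrite subr0 subrr.
  by rewrite he' -cmp_assoc hs' cmp_idr.
have e0 : cmp g r + cmp sg' h = idm N.
  apply/eqP; rewrite eq_sym -subr_eq0 opprD addrA.
  by rewrite he' e'0 cmp0l.
apply: (Qsum _ _ _ QT1).
apply: (@desh_summand Y M T1 (cmp be g) (cmp be sg') (cmp r al) (cmp h al)).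
- by rewrite -cmp_assoc (cmp_assoc al) abe cmp_idl rg.
- by rewrite -cmp_assoc (cmp_assoc al) abe cmp_idl hs'.
- by rewrite -cmp_assoc (cmp_assoc al) abe cmp_idl rs'.
- by rewrite -cmp_assoc (cmp_assoc al) abe cmp_idl hg.
- rewrite -!cmp_assoc -cmp_addr (cmp_assoc g r al) (cmp_assoc sg' h al).
  by rewrite -cmp_addl e0 cmp_idl bal.
Qed.


Lemma TV_Cplus (S T U V : obj C -> Prop) : subcat T -> subcat V ->
  twin_cotorsion S T U V -> forall Y, star T (shift1 V) Y -> Cplus T U V Y.
Proof.
move=> sT sV [cST cUV eSV] Y [T' [N [f [g [h [TT' [V' [VV' isoN]]] D]]]]].
have [eST _] := cST; have [eUV cUV'] := cUV.
have [U2 [N2 [f1 [g1 [h1 [UU2 [V2 [VV2 isoN2]]] D1]]]]] := cUV' T'.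
have TU2 : T U2.
  apply: (char cST sT) => S0 PS0.
  apply: (hz_mid (rot (rot D1))).
  - exact: hz_iso isoN2 (eSV S0 V2 PS0 VV2).
  - exact: eST S0 T' PS0 TT'.
have [E [h1' [h2' D3]]] := dist_ext (cmp f f1).
have [u [v [D4 _ _ _ _]]] := dist_oct D1 D D3.
have [E0 [al [be [bal abe]]]] := sh_esurj E.
have VE0 : V E0.
  apply: (char cUV sV) => U0 PU0.
  apply: (hz_iso (B:=E)); first by exists be, al.
  apply: (hz_mid D4).
  - exact: hz_iso isoN2 (eUV U0 V2 PU0 VV2).
  - exact: hz_iso isoN (eUV U0 V' PU0 VV').
exists U2, E, (cmp f f1), h1', h2'; split => //.
by exists E0; split => //; exists al, be.
Qed.
End L.

Theorem claim3p2 (C : TriCat) (S T U V : obj C -> Prop) :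
  subcat S -> subcat T -> subcat U -> subcat V ->
  twin_cotorsion S T U V ->
  forall (X : obj C) (Sm1 T0 : obj C)
         (s : Mor Sm1 X) (a : Mor X T0) (t : Mor T0 (sh Sm1)),
  shiftm1 S Sm1 -> T T0 -> dist s a t ->
  forall (U0 V0 : obj C) (i : Mor U0 T0) (b : Mor T0 (sh V0)) (c : Mor (sh V0) (sh U0)),
  U U0 -> V V0 -> dist i b c ->
  forall (K : obj C) (j : Mor V0 K) (k : Mor K X),
  dist j k (cmp b a) ->
  Cminus S T U K /\ (Cplus T U V X -> Hc S T U V K).
Proof.
move=> sS sT sU sV tw X Sm1 T0 s a t HSm1 TT0 D1 U0 V0 i b c UU0 VV0 D2 K j k D3.
have [cST cUV eSV] := tw.
have [eST _] := cST; have [eUV _] := cUV.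
have hzV0 : forall S0, S S0 -> hz S0 (sh V0) := fun S0 P => eSV S0 V0 P VV0.
have CmK : Cminus S T U K.
  have [u [v [D4 _ _ _ _]]] := dist_oct (rot D1) (rot D2) (rot (rot D3)).
  have [u0 eu] := shm_surj u; have [v0 ev] := shm_surj v.
  move: D4; rewrite -eu -ev cmpNr -shm_comp -shmN => /desh D5.
  exists Sm1, U0, u0, v0, (- - cmp t i); split => //.
  split => //.
  apply: (char cST sT) => S0 PS0.
  apply: (hz_mid (rot (rot D2))).
  - exact: hzV0.
  - exact: eST S0 T0 PS0 TT0.
split => // [[W1 [N1 [x [y [z [[TW1 UW1] VN1 D6]]]]]]].
split => //.
apply: (TV_Cplus sT sV tw).
have [E [h1 [h2 D7]]] := dist_ext (cmp y k).
have [u [v [D8 _ _ _ _]]] := dist_oct (rot D3) (rot D6) D7.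
have [M [al [be [bal abe]]]] := sh_esurj E.
have TM : T M.
  apply: (char cST sT) => S0 PS0.
  apply: (hz_iso (B:=E)); first by exists be, al.
  apply: (hz_mid D8).
  - exact: hzV0.
  - exact: eST S0 W1 PS0 TW1.
have D9 : dist (cmp y k) (cmp be h1) (cmp h2 al).
  apply: (dist_iso (u:=idm K) (v:=idm N1) (w:=be) (u':=idm K) (v':=idm N1) (w':=al)) D7.
  - by rewrite cmp_idl.
  - by rewrite cmp_idl.
  - by rewrite cmp_idl.
  - by rewrite cmp_idl.
  - exact: abe.
  - exact: bal.
  - by rewrite cmp_idl cmp_idr.
  - by rewrite cmp_idr.
  - by rewrite shm_id cmp_idl -cmp_assoc abe cmp_idr.
have [m em] := shm_surj (cmp h2 al).
rewrite -em -[shm m]opprK -shmN in D9.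
exists M, N1, (- m), (cmp y k), (cmp be h1); split => //.
exact: unrot.
Qed.
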